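(* Let $\Sigma$ be a signature and $\mathbf V$ a full subcategory of $\mathbf{Alg}(\Sigma)$. (1) $\mathbf V$ is closed under surjective images, small products and strong subobjects if and only if there exists a class $\{\Lambda_e\}_{e\in\mathbb E}$ of unconditional theories, each $\Lambda_e$ in some language $(\Sigma,X_e)$, such that for every $\Sigma$-algebra $\mathcal A$: $\mathcal A\in\mathbf V$ iff $\mathcal A$ is a model of $\Lambda_e$ for all $e\in\mathbb E$. (2) $\mathbf V$ is closed under split surjective images, small products and strong subobjects if and only if there exists a class $\{\Lambda_e\}_{e\in\mathbb E}$ of theories of type $\mathsf E$, each $\Lambda_e$ in some language $(\Sigma,X_e)$, such that for every $\Sigma$-algebra $\mathcal A$: $\mathcal A\in\mathbf V$ iff $\mathcal A$ is a model of $\Lambda_e$ for all $e\in\mathbb E$.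
   Context: $H$ is a frame with bottom $\bot$. An $H$-fuzzy set is a pair $(A,\mu_A)$ of a set $A$ and a function $\mu_A:A\to H$; an arrow $f:(A,\mu_A)\to(B,\mu_B)$ is a function with $\mu_A(x)\le\mu_B(f(x))$; they form $\mathbf{Fuz}_H$. For $n\ge1$, $(A,\mu_A)^n=(A^n,\mu)$ with $\mu(a_1,\dots,a_n)=\bigwedge_i\mu_A(a_i)$. A signature $\Sigma=(O,\mathrm{ar},C)$ consists of a set $O$ of operation symbols with arity $\mathrm{ar}:O\to\{1,2,3,\dots\}$ and a set $C$ of constant symbols. A language is a pair $\mathcal L=(\Sigma,X)$ with $X$ a set of variables. $\mathrm{Terms}(\mathcal L)$ is the smallest set containing $X\sqcup C$ and containing $f(t_1,\dots,t_{\mathrm{ar}(f)})$ whenever $f\in O$ and all $t_i\in\mathrm{Terms}(\mathcal L)$. A formula is either an equation $s\equiv t$ ($s,t$ terms) or a membership proposition $\mathsf E_l(t)$ with $l\in H$ and $t$ a term. A sequent $\Gamma\vdash\psi$ is a pair of a (possibly infinite) set $\Gamma$ of formulas and a formula $\psi$; $\vdash\psi$ means $\emptyset\vdash\psi$. A fuzzy theory in $\mathcal L$ is a set of sequents. A theory is unconditional if all its sequents have the form $\vdash\phi$; it is of type $\mathsf E$ if all its sequents have the form $\{\mathsf E_{l_i}(x_i)\}_{i\in I}\vdash\phi$ with $x_i\in X$ variables and $l_i\in H$. A $\Sigma$-algebra $\mathcal A=((A,\mu_A),\Sigma^{\mathcal A})$ is an $H$-fuzzy set $(A,\mu_A)$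 together with, for each $f\in O$, an arrow $f^{\mathcal A}:(A,\mu_A)^{\mathrm{ar}(f)}\to(A,\mu_A)$ of $\mathbf{Fuz}_H$ and, for each $c\in C$, an element $c^{\mathcal A}\in A$. A morphism of $\Sigma$-algebras is an arrow of $\mathbf{Fuz}_H$ between the carriers preserving all constants and commuting with all operations; this gives $\mathbf{Alg}(\Sigma)$, whose products are the products of carriers in $\mathbf{Fuz}_H$ (membership the infimum of the components) with componentwise operations and constants. An assignment is a function $\iota:X\to A$; evaluation: $x^{\mathcal A,\iota}=\iota(x)$, $c^{\mathcal A,\iota}=c^{\mathcal A}$, $f(t_1,\dots,t_n)^{\mathcal A,\iota}=f^{\mathcal A}(t_1^{\mathcal A,\iota},\dots,t_n^{\mathcal A,\iota})$. $\mathcal A\vDash_\iota s\equiv t$ iff $s^{\mathcal A,\iota}=t^{\mathcal A,\iota}$; $\mathcal A\vDash_\iota\mathsf E_l(t)$ iff $l\le\mu_A(t^{\mathcal A,\iota})$. $\mathcal A$ satisfies $\Gamma\vdash\psi$ if for every assignment $\iota$ with $\mathcal A\vDash_\iota\phi$ for all $\phi\in\Gamma$ one has $\mathcal A\vDash_\iota\psi$. $\mathcal A$ is a model of a theory $\Lambda$ if it satisfies every sequent of $\Lambda$. Closure conditions on $\mathbf V$: closed under surjective images means that if $\mathcal A\in\mathbf V$ and $e:\mathcal A\to\mathcal B$ is a morphism with surjective underlying function then $\mathcal B\in\mathbf V$; closed under split surjective images means the same for morphisms $e$ whose underlying arrow has a right inverse in $\mathbf{Fuz}_H$; closed under strong subobjects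 means that if $\mathcal B\in\mathbf V$ and $m:\mathcal A\to\mathcal B$ is a morphism whose underlying function is injective with $\mu_B(m(a))=\mu_A(a)$ for all $a$, then $\mathcal A\in\mathbf V$; closed under small products means the product of any set-indexed family of members of $\mathbf V$ is in $\mathbf V$. *)

(* Defs.v *)
From Stdlib Require Import Arith.

(* A frame: a complete lattice (arbitrary infima and suprema, indexed by
   families over an arbitrary type) in which binary meets distribute over
   arbitrary joins; it has a bottom element. *)
Record frame := Frame {
  fcar :> Type;
  fle : fcar -> fcar -> Prop;
  fle_refl : forall x, fle x x;
  fle_trans : forall x y z, fle x y -> fle y z -> fle x z;
  fle_antisym : forall x y, fle x y -> fle y x -> x = y;
  finf : forall I : Type, (I -> fcar) -> fcar;
  finf_lb : forall I (f : I -> fcar) i, fle (finf I f) (f i);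
  finf_glb : forall I (f : I -> fcar) x, (forall i, fle x (f i)) -> fle x (finf I f);
  fsup : forall I : Type, (I -> fcar) -> fcar;
  fsup_ub : forall I (f : I -> fcar) i, fle (f i) (fsup I f);
  fsup_lub : forall I (f : I -> fcar) x, (forall i, fle (f i) x) -> fle (fsup I f) x;
  fbot : fcar;
  fbot_le : forall x, fle fbot x;
  fdistr : forall (a : fcar) (I : Type) (f : I -> fcar),
    finf bool (fun b => if b then a else fsup I f)
    = fsup I (fun i => finf bool (fun b => if b then a else f i))
}.
Arguments fle {f0} _ _.
Arguments finf {f0} _ _.
Arguments fsup {f0} _ _.
Arguments fbot {f0}.

Definition idx (n : nat) : Set := { i : nat | i < n }.

Record signature := Signature {
  sop : Type;
  sar : sop -> nat;
  sar_pos : forall o, 1 <= sar o;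
  scst : Type
}.

(* membership of a tuple in (A,mu)^n is the infimum of the memberships of
   its components *)
Record algebra (H : frame) (S : signature) := Algebra {
  acar : Type;
  amu : acar -> H;
  aop : forall o : sop S, (idx (sar S o) -> acar) -> acar;
  aop_fuz : forall (o : sop S) (args : idx (sar S o) -> acar),
      fle (finf (idx (sar S o)) (fun i => amu (args i))) (amu (aop o args));
  acst : scst S -> acar
}.
Arguments acar {H S} _.
Arguments amu {H S} _ _.
Arguments aop {H S} _ _ _.
Arguments acst {H S} _ _.

Definition is_hom {H S} (A B : algebra H S) (h : acar A -> acar B) : Prop :=
  (forall a, fle (amu A a) (amu B (h a))) /\
  (forall c, h (acst A c) = acst B c) /\
  (forall o args, h (aop A o args) = aop B o (fun i => h (args i))).

Definition prod_alg {H S} (I : Type) (F : I -> algebra H S) : algebra H S.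
Proof.
  refine (@Algebra H S (forall i, acar (F i))
            (fun x => finf I (fun i => amu (F i) (x i)))
            (fun o args i => aop (F i) o (fun k => args k i)) _
            (fun c i => acst (F i) c)).
  intros o args. apply finf_glb. intro i.
  eapply fle_trans; [| apply (aop_fuz H S (F i))].
  apply finf_glb. intro k.
  eapply fle_trans; [apply (finf_lb H _ _ k) |].
  exact (finf_lb H I (fun j => amu (F j) (args k j)) i).
Defined.

Definition closed_surj_images {H S} (V : algebra H S -> Prop) : Prop :=
  forall (A B : algebra H S) (e : acar A -> acar B),
    V A -> is_hom A B e -> (forall b, exists a, e a = b) -> V B.

Definition closed_split_surj_images {H S} (V : algebra H S -> Prop) : Prop :=
  forall (A B : algebra H S) (e : acar A -> acar B),
    V A -> is_hom A B e ->
    (exists g : acar B -> acar A,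
        (forall b, fle (amu B b) (amu A (g b))) /\ (forall b, e (g b) = b)) ->
    V B.

Definition closed_strong_subobjects {H S} (V : algebra H S -> Prop) : Prop :=
  forall (A B : algebra H S) (m : acar A -> acar B),
    V B -> is_hom A B m ->
    (forall a a', m a = m a' -> a = a') ->
    (forall a, amu B (m a) = amu A a) -> V A.

Definition closed_products {H S} (V : algebra H S -> Prop) : Prop :=
  forall (I : Type) (F : I -> algebra H S),
    (forall i, V (F i)) -> V (prod_alg I F).

Inductive term (S : signature) (X : Type) : Type :=
| tvar : X -> term S X
| tcst : scst S -> term S X
| tapp : forall o : sop S, (idx (sar S o) -> term S X) -> term S X.
Arguments tvar {S X} _.
Arguments tcst {S X} _.
Arguments tapp {S X} _ _.

Inductive formula (H : frame) (S : signature) (X : Type) : Type :=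
| feq : term S X -> term S X -> formula H S X
| fmem : fcar H -> term S X -> formula H S X.
Arguments feq {H S X} _ _.
Arguments fmem {H S X} _ _.

Record sequent (H : frame) (S : signature) (X : Type) := Sequent {
  shyp : formula H S X -> Prop;
  sconcl : formula H S X
}.
Arguments shyp {H S X} _ _.
Arguments sconcl {H S X} _.

Definition theory (H : frame) (S : signature) (X : Type) :=
  sequent H S X -> Prop.

Definition unconditional {H S X} (L : theory H S X) : Prop :=
  forall s, L s -> forall phi, ~ shyp s phi.

Definition type_E {H S X} (L : theory H S X) : Prop :=
  forall s, L s -> forall phi, shyp s phi ->
    exists (l : fcar H) (x : X), phi = fmem l (tvar x).

Fixpoint eval {H S X} (A : algebra H S) (iota : X -> acar A) (t : term S X)
  : acar A :=
  match t with
  | tvar x => iota x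
  | tcst c => acst A c
  | tapp o args => aop A o (fun i => eval A iota (args i))
  end.

Definition sat {H S X} (A : algebra H S) (iota : X -> acar A)
  (phi : formula H S X) : Prop :=
  match phi with
  | feq s t => eval A iota s = eval A iota t
  | fmem l t => fle l (amu A (eval A iota t))
  end.

Definition sat_seq {H S X} (A : algebra H S) (s : sequent H S X) : Prop :=
  forall iota : X -> acar A,
    (forall phi, shyp s phi -> sat A iota phi) -> sat A iota (sconcl s).

Definition is_model {H S X} (A : algebra H S) (L : theory H S X) : Prop :=
  forall s, L s -> sat_seq A s.

(* Main.v *)
Require Import Defs.
From Stdlib Require Import Classical ClassicalEpsilon FunctionalExtensionality ProofIrrelevance.

Lemma eval_hom {H S X} (A B : algebra H S) (h : acar A -> acar B) (iota : X -> acar A) :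
  is_hom A B h -> forall t, h (eval A iota t) = eval B (fun x => h (iota x)) t.
Proof.
  intros [_ [Hc Ho]] t. induction t as [x|c|o args IH]; simpl.
  - reflexivity.
  - apply Hc.
  - rewrite Ho. f_equal. apply functional_extensionality. intro i. apply IH.
Qed.

Lemma sat_hom {H S X} (A B : algebra H S) (h : acar A -> acar B) (iota : X -> acar A) phi :
  is_hom A B h -> sat A iota phi -> sat B (fun x => h (iota x)) phi.
Proof.
  intros Hh. destruct phi as [s t|l t]; simpl; intro E.
  - rewrite <- !(eval_hom A B h iota Hh). now rewrite E.
  - rewrite <- (eval_hom A B h iota Hh). eapply fle_trans; [exact E|]. apply Hh.
Qed.

Lemma proj_hom {H S} I (F : I -> algebra H S) i :
  is_hom (prod_alg I F) (F i) (fun p => p i).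
Proof.
  split; [|split]; intros; simpl; try reflexivity.
  apply (finf_lb H I (fun j => amu (F j) (a j)) i).
Qed.

Lemma eval_prod {H S X} I (F : I -> algebra H S) (iota : X -> acar (prod_alg I F)) t :
  eval (prod_alg I F) iota t = fun i => eval (F i) (fun x => iota x i) t.
Proof.
  apply functional_extensionality_dep. intro i.
  exact (eval_hom _ _ _ iota (proj_hom I F i) t).
Qed.

Lemma seq_prod {H S X} I (F : I -> algebra H S) (s : sequent H S X) :
  (forall i, sat_seq (F i) s) -> sat_seq (prod_alg I F) s.
Proof.
  intros HF iota Hy.
  assert (Hi : forall i, sat (F i) (fun x => iota x i) (sconcl s)).
  { intro i. apply HF. intros phi Hp.
    exact (sat_hom _ _ _ iota phi (proj_hom I F i) (Hy phi Hp)). }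
  destruct (sconcl s) as [u v|l u]; simpl in *.
  - rewrite !eval_prod. apply functional_extensionality_dep. exact Hi.
  - rewrite eval_prod. apply finf_glb. exact Hi.
Qed.

Lemma seq_sub {H S X} (A B : algebra H S) m (s : sequent H S X) :
  is_hom A B m -> (forall a a', m a = m a' -> a = a') ->
  (forall a, amu B (m a) = amu A a) -> sat_seq B s -> sat_seq A s.
Proof.
  intros Hm Hinj Hmu HB iota Hy.
  assert (Hc : sat B (fun x => m (iota x)) (sconcl s)).
  { apply HB. intros phi Hp. exact (sat_hom _ _ _ iota phi Hm (Hy phi Hp)). }
  destruct (sconcl s) as [u v|l u]; simpl in *.
  - apply Hinj. rewrite !(eval_hom A B m iota Hm). exact Hc.
  - rewrite <- Hmu, (eval_hom A B m iota Hm). exact Hc.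
Qed.

Lemma seq_img {H S X} (A B : algebra H S) e (iB : X -> acar B) (iA : X -> acar A) phi :
  is_hom A B e -> (forall x, e (iA x) = iB x) -> sat A iA phi -> sat B iB phi.
Proof.
  intros He Hx Hs.
  assert (Eq : (fun x => e (iA x)) = iB) by (apply functional_extensionality; exact Hx).
  rewrite <- Eq. exact (sat_hom _ _ _ _ _ He Hs).
Qed.

Lemma seq_surj {H S X} (A B : algebra H S) e (s : sequent H S X) :
  is_hom A B e -> (forall b, exists a, e a = b) ->
  (forall phi, ~ shyp s phi) -> sat_seq A s -> sat_seq B s.
Proof.
  intros He Hs Hu HA iB _.
  assert (Hex : forall x, exists a, e a = iB x) by (intro; apply Hs).
  destruct (choice _ Hex) as [iA HiA].
  apply (seq_img A B e iB iA _ He HiA).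
  apply HA. intros phi Hp. exfalso. exact (Hu phi Hp).
Qed.

Lemma seq_split {H S X} (A B : algebra H S) e g (s : sequent H S X) :
  is_hom A B e -> (forall b, fle (amu B b) (amu A (g b))) -> (forall b, e (g b) = b) ->
  (forall phi, shyp s phi -> exists l x, phi = fmem l (tvar x)) ->
  sat_seq A s -> sat_seq B s.
Proof.
  intros He Hg Heg HE HA iB Hy.
  apply (seq_img A B e iB (fun x => g (iB x)) _ He (fun x => Heg _)).
  apply HA. intros phi Hp. destruct (HE phi Hp) as [l [x ->]].
  specialize (Hy _ Hp). simpl in *. eapply fle_trans; [exact Hy| apply Hg].
Qed.

Lemma sat_reflect {H S X} (A B : algebra H S) m (iota : X -> acar A) phi :
  is_hom A B m -> (forall a a', m a = m a' -> a = a') ->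
  (forall a, amu B (m a) = amu A a) -> sat B (fun x => m (iota x)) phi -> sat A iota phi.
Proof.
  intros Hm Hinj Hmu Hc.
  destruct phi as [u v|l u]; simpl in *.
  - apply Hinj. rewrite !(eval_hom A B m iota Hm). exact Hc.
  - rewrite <- Hmu, (eval_hom A B m iota Hm). exact Hc.
Qed.

Lemma sat_prod {H S X} I (F : I -> algebra H S) (iota : X -> acar (prod_alg I F)) phi :
  (forall i, sat (F i) (fun x => iota x i) phi) -> sat (prod_alg I F) iota phi.
Proof.
  intros Hi. destruct phi as [u v|l u]; simpl in *.
  - rewrite !eval_prod. apply functional_extensionality_dep. exact Hi.
  - rewrite eval_prod. apply finf_glb. exact Hi.
Qed.

Lemma img_op_ex {H S X} (P : algebra H S) (iota : X -> acar P) o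
  (args : idx (sar S o) -> {p : acar P | exists t, eval P iota t = p}) :
  exists t, eval P iota t = aop P o (fun k => proj1_sig (args k)).
Proof.
  assert (Hk : forall k, exists t, eval P iota t = proj1_sig (args k))
    by (intro k; exact (proj2_sig (args k))).
  destruct (choice _ Hk) as [ts Hts].
  exists (tapp o ts). simpl. f_equal. apply functional_extensionality. exact Hts.
Qed.

Definition img_alg {H S X} (P : algebra H S) (iota : X -> acar P) : algebra H S.
Proof.
  refine (@Algebra H S {p : acar P | exists t, eval P iota t = p}
            (fun c => amu P (proj1_sig c))
            (fun o args => exist _ (aop P o (fun k => proj1_sig (args k))) (img_op_ex P iota o args)) _
            (fun c => exist _ (acst P c) (ex_intro _ (tcst c) eq_refl))).
  intros o args. simpl. apply (aop_fuz H S P).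
Defined.

Lemma img_incl_hom {H S X} (P : algebra H S) (iota : X -> acar P) :
  is_hom (img_alg P iota) P (@proj1_sig _ _).
Proof. split; [|split]; intros; simpl; try reflexivity. apply fle_refl. Qed.

Lemma img_incl_inj {H S X} (P : algebra H S) (iota : X -> acar P) :
  forall a a' : acar (img_alg P iota), proj1_sig a = proj1_sig a' -> a = a'.
Proof.
  intros [a Ha] [a' Ha'] E. simpl in E. subst. f_equal. apply proof_irrelevance.
Qed.

Definition valid {H S X} (V : algebra H S -> Prop) (G : formula H S X -> Prop) phi :=
  forall B, V B -> forall iota : X -> acar B,
    (forall psi, G psi -> sat B iota psi) -> sat B iota phi.

Lemma birkhoff {H S} (V : algebra H S -> Prop) (A : algebra H S)
  (G : formula H S (acar A) -> Prop) :
  closed_products V -> closed_strong_subobjects V ->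
  (forall phi, valid V G phi -> sat A (fun x => x) phi) ->
  exists (C : algebra H S) (h : acar C -> acar A) (g : acar A -> acar C),
    V C /\ is_hom C A h /\ (forall a, h (g a) = a) /\ (forall phi, G phi -> sat C g phi).
Proof.
  intros HP HSub HA.
  set (I := {phi : formula H S (acar A) | ~ valid V G phi}).
  assert (Hw : forall i : I, exists p : {B : algebra H S & acar A -> acar B},
     V (projT1 p) /\ (forall psi, G psi -> sat (projT1 p) (projT2 p) psi) /\
     ~ sat (projT1 p) (projT2 p) (proj1_sig i)).
  { intros [phi Hphi]. simpl. apply NNPP. intro Hn. apply Hphi.
    intros B HB iota HG. apply NNPP. intro Hs. apply Hn.
    exists (existT _ B iota). simpl. auto. }
  destruct (choice _ Hw) as [w Hw'].
  set (F := fun i => projT1 (w i)).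
  set (P := prod_alg I F).
  set (iP := (fun x i => projT2 (w i) x) : acar A -> acar P).
  set (C := img_alg P iP).
  assert (Hcomp : forall t i, eval P iP t i = eval (F i) (projT2 (w i)) t).
  { intros t i. unfold P. rewrite eval_prod. reflexivity. }
  assert (Hsep : forall s t, eval P iP s = eval P iP t -> eval A (fun x => x) s = eval A (fun x => x) t).
  { intros s t E. destruct (classic (valid V G (feq s t))) as [Hv|Hv].
    - exact (HA _ Hv).
    - exfalso. destruct (Hw' (exist _ (feq s t) Hv)) as [_ [_ Hn]]. apply Hn. simpl.
      pose proof (Hcomp s (exist _ (feq s t) Hv)) as E1. pose proof (Hcomp t (exist _ (feq s t) Hv)) as E2. unfold F in E1, E2. rewrite <- E1, <- E2, E. reflexivity. }
  assert (Hmem : forall t, fle (amu P (eval P iP t)) (amu A (eval A (fun x => x) t))).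
  { intro t. destruct (classic (valid V G (fmem (amu P (eval P iP t)) t))) as [Hv|Hv].
    - exact (HA _ Hv).
    - exfalso. set (i := (exist (fun phi => ~ valid V G phi) (fmem (amu P (eval P iP t)) t) Hv : I)). destruct (Hw' i) as [_ [_ Hn]]. apply Hn. simpl.
      pose proof (Hcomp t i) as E1. unfold F in E1. rewrite <- E1.
      exact (finf_lb H I (fun j => amu (F j) (eval P iP t j)) i). }
  set (h := fun c : acar C => eval A (fun x => x)
              (proj1_sig (constructive_indefinite_description _ (proj2_sig c)))).
  assert (Hh : forall (c : acar C) t, eval P iP t = proj1_sig c -> h c = eval A (fun x => x) t).
  { intros c t E. unfold h. apply Hsep.
    destruct (constructive_indefinite_description _ (proj2_sig c)) as [t' Ht']. simpl.
    rewrite Ht', E. reflexivity. }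
  set (g := fun a : acar A => (exist _ (iP a) (ex_intro _ (tvar a) eq_refl)) : acar C).
  exists C, h, g. split; [|split; [|split]].
  - apply (HSub C P (@proj1_sig _ _)).
    + apply HP. intro i. exact (proj1 (Hw' i)).
    + apply img_incl_hom.
    + apply img_incl_inj.
    + reflexivity.
  - split; [|split].
    + intros c. destruct (proj2_sig c) as [t Ht] eqn:Ec. rewrite (Hh c t Ht). change (fle (amu P (proj1_sig c)) (amu A (eval A (fun x => x) t))). rewrite <- Ht. apply Hmem.
    + intro c. rewrite (Hh (acst C c) (tcst c) eq_refl). reflexivity.
    + intros o args.
      assert (Hk : forall k, exists t, eval P iP t = proj1_sig (args k))
        by (intro k; exact (proj2_sig (args k))).
      destruct (choice _ Hk) as [ts Hts].
      rewrite (Hh _ (tapp o ts)).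
      * simpl. f_equal. apply functional_extensionality. intro k. symmetry. apply Hh. apply Hts.
      * assert (E : (fun k => eval P iP (ts k)) = (fun k => proj1_sig (args k)))
          by (apply functional_extensionality; exact Hts).
        exact (f_equal (aop P o) E).
  - intro a. apply (Hh (g a) (tvar a)). reflexivity.
  - intros phi Gphi.
    apply (sat_reflect C P (@proj1_sig _ _) g phi (img_incl_hom P iP) (img_incl_inj P iP)
             (fun _ => eq_refl)).
    apply sat_prod. intro i. exact (proj1 (proj2 (Hw' i)) phi Gphi).
Qed.

Theorem theorem55 (H : frame) (S : signature) (V : algebra H S -> Prop) :
  ((closed_surj_images V /\ closed_products V /\ closed_strong_subobjects V)
   <->
   exists (E : Type) (X : E -> Type) (L : forall e, theory H S (X e)),
     (forall e, unconditional (L e)) /\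
     (forall A : algebra H S, V A <-> forall e, is_model A (L e)))
  /\
  ((closed_split_surj_images V /\ closed_products V /\ closed_strong_subobjects V)
   <->
   exists (E : Type) (X : E -> Type) (L : forall e, theory H S (X e)),
     (forall e, type_E (L e)) /\
     (forall A : algebra H S, V A <-> forall e, is_model A (L e))).
Proof.
  split; split.
  - intros [Hsurj [Hprod Hsub]].
    exists (algebra H S), (fun e => acar e),
      (fun e s => (forall phi, ~ shyp s phi) /\ (forall B, V B -> sat_seq B s)).
    split.
    + intros e s [Hu _]. exact Hu.
    + intros A. split.
      * intros HA e s [_ Hv]. apply Hv. exact HA.
      * intros Hm.
        destruct (birkhoff V A (fun _ => False) Hprod Hsub) as [Cc [h [g [HVC [Hh [Hhg _]]]]]].
        { intros phi Hv.
          apply (Hm A (Sequent H S (acar A) (fun _ => False) phi)).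
          - split; [intros psi Hf; exact Hf|]. intros B HB iota Hy. exact (Hv B HB iota Hy).
          - intros psi Hf. destruct Hf. }
        apply (Hsurj Cc A h HVC Hh). intro a. exists (g a). apply Hhg.
  - intros [E [X [L [Hu HL]]]]. split; [|split].
    + intros A B e VA He Hs. apply HL. intros e0 s Hs0.
      apply (seq_surj A B e s He Hs (Hu e0 s Hs0)). exact (proj1 (HL A) VA e0 s Hs0).
    + intros I F HF. apply HL. intros e0 s Hs0. apply seq_prod. intro i.
      exact (proj1 (HL (F i)) (HF i) e0 s Hs0).
    + intros A B m VB Hm Hinj Hmu. apply HL. intros e0 s Hs0.
      apply (seq_sub A B m s Hm Hinj Hmu). exact (proj1 (HL B) VB e0 s Hs0).
  - intros [Hsurj [Hprod Hsub]].
    exists (algebra H S), (fun e => acar e),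
      (fun e s => (forall phi, shyp s phi <-> exists x, phi = fmem (amu e x) (tvar x))
                  /\ (forall B, V B -> sat_seq B s)).
    split.
    + intros e s [Hu _] phi Hp. destruct (proj1 (Hu phi) Hp) as [x Hx].
      exists (amu e x), x. exact Hx.
    + intros A. split.
      * intros HA e s [_ Hv]. apply Hv. exact HA.
      * intros Hm.
        set (G := fun phi : formula H S (acar A) => exists x, phi = fmem (amu A x) (tvar x)).
        destruct (birkhoff V A G Hprod Hsub) as [Cc [h [g [HVC [Hh [Hhg HG]]]]]].
        { intros phi Hv.
          apply (Hm A (Sequent H S (acar A) G phi)).
          - split; [intros psi; simpl; tauto|]. intros B HB iota Hy. exact (Hv B HB iota Hy).
          - intros psi [x ->]. simpl. apply fle_refl. }
        apply (Hsurj Cc A h HVC Hh). exists g. split.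
        -- intro a. exact (HG (fmem (amu A a) (tvar a)) (ex_intro _ a eq_refl)).
        -- exact Hhg.
  - intros [E [X [L [Hu HL]]]]. split; [|split].
    + intros A B e VA He [g [Hg Heg]]. apply HL. intros e0 s Hs0.
      apply (seq_split A B e g s He Hg Heg (Hu e0 s Hs0)). exact (proj1 (HL A) VA e0 s Hs0).
    + intros I F HF. apply HL. intros e0 s Hs0. apply seq_prod. intro i.
      exact (proj1 (HL (F i)) (HF i) e0 s Hs0).
    + intros A B m VB Hm Hinj Hmu. apply HL. intros e0 s Hs0.
      apply (seq_sub A B m s Hm Hinj Hmu). exact (proj1 (HL B) VB e0 s Hs0).
Qed.
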